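(* Let $\mathcal{H}$ be a hypergraph on $V=\{v_1,\dots,v_n\}$. For $i\le n$ let $V_i=\{v_1,\dots,v_i\}$ and $\mathcal{H}_i=(V_i,\{F\cap V_i\mid F\in\mathcal{H}\})$. Let $k<i\le n$ and $E\in\mathrm{ext}_k(\mathcal{H}_i)$. Then $E\setminus\{v_i\}\in\mathrm{ext}_k(\mathcal{H}_{i-1})$.
   Context: For a hypergraph $\mathcal{H}$ on vertex set $W$, a $k$-trace on $W$ is a pair $(T,S)$ with $S\subseteq W$, $|S|=k$, $T\subseteq S$; $F$ realizes it if $F\cap S=T$. $\mathrm{traces}_k(F)$ is the set of $k$-traces on $W$ realized by $F$, and $\mathrm{traces}_k(\mathcal{H})=\bigcup_{F\in\mathcal{H}}\mathrm{traces}_k(F)$. $\mathrm{ext}_k(\mathcal{H})$ is the hypergraph on $W$ whose hyperedges are all $E\subseteq W$ with $\mathrm{traces}_k(E)\subseteq\mathrm{traces}_k(\mathcal{H})$. *)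

(* Defs.v *)
From mathcomp Require Import all_boot.
Set Implicit Arguments. Unset Strict Implicit. Unset Printing Implicit Defensive.

(* A hypergraph on a ground set W (a subset of the finite type T) is given by
   its ground set W and its set of hyperedges H : {set {set T}}. *)
Section Traces.
Variable T : finType.

Definition is_ktrace (k : nat) (W : {set T}) (p : {set T} * {set T}) : bool :=
  [&& p.2 \subset W, #|p.2| == k & p.1 \subset p.2].

Definition traces_k (k : nat) (W : {set T}) (F : {set T}) : {set {set T} * {set T}} :=
  [set p | is_ktrace k W p & F :&: p.2 == p.1].

Definition traces_kH (k : nat) (W : {set T}) (H : {set {set T}}) :
  {set {set T} * {set T}} :=
  \bigcup_(F in H) traces_k k W F.

Definition ext_k (k : nat) (W : {set T}) (H : {set {set T}}) : {set {set T}} :=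
  [set E : {set T} | (E \subset W) && (traces_k k W E \subset traces_kH k W H)].
End Traces.

(* V = {v_1,...,v_n} is modelled as 'I_n, with v_j (1-indexed) the ordinal j-1. *)
Definition Vset (n i : nat) : {set 'I_n} := [set v : 'I_n | v < i].

Definition restrH (n i : nat) (H : {set {set 'I_n}}) : {set {set 'I_n}} :=
  [set F :&: Vset n i | F in H].

(* Main.v *)
Require Import Defs.
From mathcomp Require Import all_boot.

Theorem lemma5 (n : nat) (H : {set {set 'I_n}}) (k i : nat)
  (hki : k < i) (hin : i <= n) (vi : 'I_n) (hvi : nat_of_ord vi = i.-1)
  (E : {set 'I_n}) (hE : E \in ext_k k (Vset n i) (restrH i H)) :
  E :\ vi \in ext_k k (Vset n i.-1) (restrH i.-1 H).
Proof.
move: hE; rewrite !inE => /andP[sEW sTr].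
have sub : Vset n i.-1 \subset Vset n i.
  by apply/subsetP => x; rewrite !inE => h; exact: leq_trans h (leq_pred _).
apply/andP; split.
  apply/subsetP => x; rewrite !inE => /andP[xv xE].
  have := subsetP sEW x xE; rewrite inE => xi.
  rewrite ltn_neqAle -ltnS prednK; last by apply: leq_ltn_trans hki.
  by rewrite xi andbT; apply: contra xv => /eqP h; apply/eqP/val_inj; rewrite /= hvi h.
apply/subsetP => [[Tt S]]; rewrite inE /is_ktrace /= => /andP[/and3P[SW cS TS] /eqP eT].
have viS : vi \notin S.
  apply/negP => /(subsetP SW); by rewrite inE hvi ltnn.
have eT' : E :&: S = Tt.
  rewrite -eT; apply/setP => x; rewrite !inE.
  case: (x =P vi) => [->|]; last by [].
  by rewrite (negbTE viS) !andbF.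
have : (Tt, S) \in traces_k k (Vset n i) E.
  by rewrite inE /is_ktrace /= (subset_trans SW sub) cS TS eT' eqxx.
move/(subsetP sTr)/bigcupP => [F' /imsetP[F FH ->]]; rewrite inE /is_ktrace /= => /andP[_ /eqP eF].
apply/bigcupP; exists (F :&: Vset n i.-1); first by apply/imsetP; exists F.
rewrite inE /is_ktrace /= SW cS TS /= -eF.
apply/eqP/setP => x; rewrite !inE.
case xS: (x \in S); rewrite ?andbF //.
have := subsetP SW x xS; rewrite inE => h.
have := subsetP sub x; rewrite !inE => h2.
by rewrite h (h2 h).
Qed.
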